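(* Let $n\ge3$ and let $\mathcal D_n$ be a minimal DFA with state set $Q_n=\{0,\dots,n-1\}$ and initial state $0$ recognizing a left ideal, with transition semigroup $T_n$. If every chain of states of $\mathcal D_n$ strictly ordered by $\prec$ has at most $2$ elements (i.e., a maximal-length such chain has length $2$), then $|T_n|\le n^{n-1}+n-1$ and $T_n$ is a subsemigroup of $S_n$.
   Context: A left ideal is a nonempty $L$ with $L=\Sigma^*L$. For a state $q$, $K_q$ is the language accepted from $q$; $p\prec q$ means $K_p\subsetneq K_q$. The transition semigroup is the set of state transformations induced by nonempty words. Notation: $(p\to q)$ maps $p$ to $q$ and fixes other states; $(Q_n\to q)$ is constant; $(p_0,\dots,p_{k-1})$ is a cyclic permutation fixing other states. $S_n$ is the transition semigroup of the DFA with states $Q_n$, initial $0$, final $\{n-1\}$, alphabet $\{a,b,c,d,e\}$, with $a\colon(1,2,\dots,n-1)$, $b\colon(1,2)$, $c\colon(n-1\to1)$, $d\colon(n-1\to0)$, $e\colon(Q_n\to1)$. *)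

(* Defs.v *)
From mathcomp Require Import all_boot all_fingroup.
From mathcomp Require Import boolp.
Set Implicit Arguments. Unset Strict Implicit. Unset Printing Implicit Defensive.

(* A DFA over the alphabet [Sigma] with state set 'I_n is given by its
   transition function [delta] and its set of final states [F]. *)

Definition dstar (Sigma : finType) (n : nat) (delta : Sigma -> 'I_n -> 'I_n)
  (w : seq Sigma) (q : 'I_n) : 'I_n :=
  foldl (fun p a => delta a p) q w.

Definition Klang (Sigma : finType) (n : nat) (delta : Sigma -> 'I_n -> 'I_n)
  (F : {set 'I_n}) (q : 'I_n) (w : seq Sigma) : Prop :=
  dstar delta w q \in F.

Definition left_ideal (Sigma : finType) (L : seq Sigma -> Prop) : Prop :=
  (exists w, L w) /\
  (forall w, L w <-> exists u v, w = u ++ v /\ L v).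

Definition minimal_dfa (Sigma : finType) (n : nat) (delta : Sigma -> 'I_n -> 'I_n)
  (F : {set 'I_n}) (q0 : 'I_n) : Prop :=
  (forall q, exists w, dstar delta w q0 = q) /\
  (forall p q, (forall w, Klang delta F p w <-> Klang delta F q w) -> p = q).

Definition prec (Sigma : finType) (n : nat) (delta : Sigma -> 'I_n -> 'I_n)
  (F : {set 'I_n}) (p q : 'I_n) : Prop :=
  (forall w, Klang delta F p w -> Klang delta F q w) /\
  (exists w, Klang delta F q w /\ ~ Klang delta F p w).

Definition word_tr (Sigma : finType) (n : nat) (delta : Sigma -> 'I_n -> 'I_n)
  (w : seq Sigma) : {ffun 'I_n -> 'I_n} := [ffun q => dstar delta w q].

Definition trans_sg (Sigma : finType) (n : nat) (delta : Sigma -> 'I_n -> 'I_n)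
  : {set {ffun 'I_n -> 'I_n}} :=
  [set t | `[< exists w : seq Sigma, w <> [::] /\ t = word_tr delta w >]].

(* turn a nat function into a transformation of 'I_n (values out of range
   are never produced by the functions below when n >= 3) *)
Definition natf (n : nat) (f : nat -> nat) (q : 'I_n) : 'I_n := insubd q (f q).

(* The letters a, b, c, d, e of the DFA defining S_n, indexed by 'I_5 *)
Definition Sletter (n : nat) (x : 'I_5) (q : nat) : nat :=
  match val x with
  | 0 =>
      if q == 0 then 0 else if q == n.-1 then 1 else q.+1
  | 1 =>
      if q == 1 then 2 else if q == 2 then 1 else q
  | 2 =>
      if q == n.-1 then 1 else q
  | 3 =>
      if q == n.-1 then 0 else q
  | _ =>
      1
  end.

Definition S_delta (n : nat) (x : 'I_5) : 'I_n -> 'I_n := natf (Sletter n x).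

Definition S_sg (n : nat) : {set {ffun 'I_n -> 'I_n}} := trans_sg (@S_delta n).

Definition relabel (n : nat) (pi : {perm 'I_n}) (t : {ffun 'I_n -> 'I_n})
  : {ffun 'I_n -> 'I_n} := [ffun q => pi (t ((pi^-1)%g q))].

(* Main.v *)
Require Import Defs.
From mathcomp Require Import all_boot all_fingroup.
From mathcomp Require Import zify boolp.
Set Implicit Arguments. Unset Strict Implicit. Unset Printing Implicit Defensive.

Definition gen n (f : 'I_n.+3 -> 'I_n.+3) :=
  exists w : seq 'I_5, w <> [::] /\ forall q, dstar (@S_delta n.+3) w q = f q.

Lemma dstar_cat (Sigma : finType) m (delta : Sigma -> 'I_m -> 'I_m) w1 w2 q :
  dstar delta (w1 ++ w2) q = dstar delta w2 (dstar delta w1 q).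
Proof. by rewrite /dstar foldl_cat. Qed.

Lemma gen_comp n (f g : 'I_n.+3 -> 'I_n.+3) : gen f -> gen g -> gen (fun q => g (f q)).
Proof.
case=> [w1 [ne1 e1]] [w2 [ne2 e2]]; exists (w1 ++ w2); split.
  by case: w1 {e1} ne1.
by move=> q; rewrite dstar_cat e1 e2.
Qed.

Lemma gen_ext n (f g : 'I_n.+3 -> 'I_n.+3) : f =1 g -> gen f -> gen g.
Proof. by move=> fg [w [ne e]]; exists w; split=> // q; rewrite e fg. Qed.

Lemma gen_letter n x : gen (@S_delta n.+3 x).
Proof. by exists [:: x]. Qed.

Definition sw (T : eqType) (x y : T) q := if q == x then y else if q == y then x else q.
Definition mv (T : eqType) (y z : T) q := if q == y then z else q.
Definition o n k : 'I_n.+3 := inord k.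

Lemma valo n k : k <= n.+2 -> val (o n k) = k.
Proof. by move=> h; apply: inordK. Qed.

Lemma oE n k (q : 'I_n.+3) : k <= n.+2 -> (q == o n k) = (val q == k).
Proof. by move=> h; rewrite -val_eqE /= valo. Qed.

Lemma sw_invol (T : eqType) (x y q : T) : sw x y (sw x y q) = q.
Proof.
rewrite /sw; case: (q =P x) => [->|hx].
  by rewrite eqxx; case: (y =P x).
case: (q =P y) => [->|hy]; first by rewrite eqxx.
by move/eqP/negbTE: hx => ->; move/eqP/negbTE: hy => ->.
Qed.

Lemma conj_sw (T : eqType) (A Ai : T -> T) u v r :
  cancel Ai A -> injective A -> A (sw u v (Ai r)) = sw (A u) (A v) r.
Proof.
move=> K inj; rewrite /sw.
case: (Ai r =P u) => [<-|h1]; first by rewrite K eqxx.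
have -> : (r == A u) = false.
  by apply/eqP => e; apply: h1; apply: inj; rewrite K.
case: (Ai r =P v) => [<-|h2]; first by rewrite K eqxx.
have -> : (r == A v) = false.
  by apply/eqP => e; apply: h2; apply: inj; rewrite K.
by rewrite K.
Qed.

Lemma conj_mv (T : eqType) (A Ai : T -> T) u v r :
  cancel Ai A -> injective A -> A (mv u v (Ai r)) = mv (A u) (A v) r.
Proof.
move=> K inj; rewrite /mv.
case: (Ai r =P u) => [<-|h1]; first by rewrite K eqxx.
have -> : (r == A u) = false.
  by apply/eqP => e; apply: h1; apply: inj; rewrite K.
by rewrite K.
Qed.

Definition la : 'I_5 := @Ordinal 5 0 isT.
Definition lb : 'I_5 := @Ordinal 5 1 isT.
Definition lc : 'I_5 := @Ordinal 5 2 isT.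
Definition ld : 'I_5 := @Ordinal 5 3 isT.
Definition le : 'I_5 := @Ordinal 5 4 isT.

Lemma val_S_delta n x (q : 'I_n.+3) : val (@S_delta n.+3 x q) =
  if Sletter n.+3 x q < n.+3 then Sletter n.+3 x q else val q.
Proof. by rewrite /S_delta /natf val_insubd. Qed.

Lemma letter_b n : @S_delta n.+3 lb =1 sw (o n 1) (o n 2).
Proof.
move=> q; apply: val_inj; rewrite val_S_delta /Sletter /= /sw !oE //.
have := ltn_ord q.
case: (val q =P 1) => [->|h1] /=; first by rewrite valo.
case: (val q =P 2) => [->|h2] /=; first by rewrite valo.
by move=> ->.
Qed.

Lemma letter_c n : @S_delta n.+3 lc =1 mv (o n n.+2) (o n 1).
Proof.
move=> q; apply: val_inj; rewrite val_S_delta /Sletter /= /mv !oE //.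
have := ltn_ord q.
case: (val q =P n.+2) => [->|h1] /=; first by rewrite valo.
by move=> ->.
Qed.

Lemma letter_d n : @S_delta n.+3 ld =1 mv (o n n.+2) ord0.
Proof.
move=> q; apply: val_inj; rewrite val_S_delta /Sletter /= /mv !oE //.
have := ltn_ord q.
case: (val q =P n.+2) => [->|h1] /=; first by [].
by move=> ->.
Qed.

Lemma letter_e n : @S_delta n.+3 le =1 (fun _ => o n 1).
Proof. by move=> q; apply: val_inj; rewrite val_S_delta /Sletter /= valo. Qed.

Definition aF n : 'I_n.+3 -> 'I_n.+3 := @S_delta n.+3 la.
Arguments aF {n}.

Lemma val_aF n (q : 'I_n.+3) : val (aF q) =
  if val q == 0 then 0 else if val q == n.+2 then 1 else (val q).+1.
Proof.
rewrite /aF val_S_delta /Sletter /=.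
case: q => q lt /=.
case: (q =P 0) => [->|h1] //=.
case: (q =P n.+2) => [->|h2] //=.
rewrite ifT //; lia.
Qed.

Lemma aF0 n k (q : 'I_n.+3) : val q = 0 -> iter k aF q = q.
Proof.
move=> h; elim: k => //= k ->; apply: val_inj; by rewrite val_aF h.
Qed.

Lemma iter_aF n k (q : 'I_n.+3) : 0 < val q -> k <= n.+2 ->
  val (iter k aF q) = if val q + k <= n.+2 then val q + k else val q + k - n.+2.
Proof.
case: q => q lt /= q0.
elim: k => [|k IH] hk; first by rewrite addn0 ifT //; lia.
rewrite iterS val_aF /= IH; last lia.
case: leqP => h1; case: leqP => h2; repeat case: eqP => ?; lia.
Qed.

Lemma aF_order n (q : 'I_n.+3) : iter n.+2 aF q = q.
Proof.
case: (posnP (val q)) => h; first exact: aF0.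
apply: val_inj; rewrite iter_aF // ifF; lia.
Qed.

Definition ainv n : 'I_n.+3 -> 'I_n.+3 := iter n.+1 aF.

Lemma ainvK n : cancel (@ainv n) aF.
Proof. by move=> q; rewrite /ainv -iterS aF_order. Qed.

Lemma aF_inj n : injective (@aF n).
Proof.
move=> x y e; by rewrite -(aF_order x) -(aF_order y) !iterSr e.
Qed.

Lemma gen_id n : gen (fun q : 'I_n.+3 => q).
Proof.
exists [:: lb; lb]; split=> // q.
by rewrite /dstar /= !letter_b sw_invol.
Qed.

Lemma gen_iter n k (f : 'I_n.+3 -> 'I_n.+3) : gen f -> gen (iter k f).
Proof.
move=> g; elim: k => [|k IH] /=; first exact: gen_id.
exact: (gen_comp IH g).
Qed.

Lemma gen_aF n : gen (@aF n). Proof. exact: gen_letter. Qed.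

Lemma gen_conj_sw n (A Ai : 'I_n.+3 -> 'I_n.+3) u v :
  gen A -> gen Ai -> cancel Ai A -> injective A -> gen (sw u v) -> gen (sw (A u) (A v)).
Proof.
move=> gA gAi K inj g.
apply: (gen_ext (f := fun r => A (sw u v (Ai r)))).
  by move=> r; rewrite conj_sw.
apply: gen_comp gA; exact: gen_comp g.
Qed.

Lemma gen_conj_mv n (A Ai : 'I_n.+3 -> 'I_n.+3) u v :
  gen A -> gen Ai -> cancel Ai A -> injective A -> gen (mv u v) -> gen (mv (A u) (A v)).
Proof.
move=> gA gAi K inj g.
apply: (gen_ext (f := fun r => A (mv u v (Ai r)))).
  by move=> r; rewrite conj_mv.
apply: gen_comp gA; exact: gen_comp g.
Qed.

Lemma aF_o n i : 0 < i -> i <= n.+1 -> aF (o n i) = o n i.+1.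
Proof.
move=> h1 h2; apply: val_inj; rewrite val_aF !valo //; try lia.
case: eqP => ?; first lia. case: eqP => ?; first lia. by [].
Qed.

Lemma gen_adj n i : 0 < i -> i <= n.+1 -> gen (sw (o n i) (o n i.+1)).
Proof.
elim: i => [//|[|i] IH] _ hi.
  by exists [:: lb]; split=> // q; rewrite /dstar /= letter_b.
have -> : sw (o n i.+2) (o n i.+3) = sw (aF (o n i.+1)) (aF (o n i.+2)) by rewrite !aF_o //; lia.
apply: (gen_conj_sw (Ai := @ainv n)) => //.
- exact: gen_aF.
- exact: gen_iter (gen_aF n).
- exact: ainvK.
- exact: aF_inj.
- apply: IH => //; lia.
Qed.

Lemma o_eq n j k : j <= n.+2 -> k <= n.+2 -> (o n j == o n k) = (j == k).
Proof. by move=> hj hk; rewrite oE // valo. Qed.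

Lemma gen_conj_swap n (p q : 'I_n.+3) u v :
  gen (sw p q) -> gen (sw u v) -> gen (sw (sw p q u) (sw p q v)).
Proof.
move=> gA g; apply: (gen_conj_sw (Ai := sw p q)) => //.
- by move=> r; rewrite sw_invol.
- by apply: (can_inj (g := sw p q)) => r; rewrite sw_invol.
Qed.

Lemma gen_conj_swap_mv n (p q : 'I_n.+3) u v :
  gen (sw p q) -> gen (mv u v) -> gen (mv (sw p q u) (sw p q v)).
Proof.
move=> gA g; apply: (gen_conj_mv (Ai := sw p q)) => //.
- by move=> r; rewrite sw_invol.
- by apply: (can_inj (g := sw p q)) => r; rewrite sw_invol.
Qed.

Lemma gen_sw1 n i : i <= n -> gen (sw (o n 1) (o n i.+2)).
Proof.
elim: i => [|i IH] hi; first exact: gen_adj.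
have -> : sw (o n 1) (o n i.+3) =
   sw (sw (o n i.+2) (o n i.+3) (o n 1)) (sw (o n i.+2) (o n i.+3) (o n i.+2)).
  by rewrite /sw !o_eq //; try lia; rewrite eqxx.
apply: gen_conj_swap; first (apply: gen_adj; lia).
apply: IH; lia.
Qed.

Lemma neq0 n (y : 'I_n.+3) : (y != ord0) = (val y != 0).
Proof. by rewrite -val_eqE. Qed.

Lemma gen_sw1' n (y : 'I_n.+3) : y != ord0 -> y != o n 1 -> gen (sw (o n 1) y).
Proof.
rewrite neq0 oE //; case: y => y ly /= h0 h1.
have -> : Ordinal ly = o n (y - 2).+2.
  apply: val_inj; rewrite valo /=; lia.
apply: gen_sw1; lia.
Qed.

Lemma sw_same (T : eqType) (x q : T) : sw x x q = q.
Proof. by rewrite /sw; case: eqP. Qed.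

Lemma sw_sym (T : eqType) (x y q : T) : sw x y q = sw y x q.
Proof.
rewrite /sw; case: (q =P x) => [hx|hx]; case: (q =P y) => [hy|hy] //.
by rewrite -hx -hy.
Qed.

Lemma gen_swnz n (x y : 'I_n.+3) : x != ord0 -> y != ord0 -> gen (sw x y).
Proof.
move=> hx hy.
case: (x =P y) => [<-|nxy].
  by apply: gen_ext (@gen_id n) => q; rewrite sw_same.
case: (x =P o n 1) => [ex|nx1].
  rewrite ex; apply: gen_sw1'; first exact: hy.
  by apply/eqP => e; apply: nxy; rewrite ex e.
case: (y =P o n 1) => [ey|ny1].
  apply: (gen_ext (f := sw (o n 1) x)); first by move=> q; rewrite sw_sym ey.
  by apply: gen_sw1' => //; apply/eqP.
have -> : sw x y = sw (sw (o n 1) x (o n 1)) (sw (o n 1) x y).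
  have e1 : (y == o n 1) = false by apply/eqP.
  have e2 : (y == x) = false by apply/eqP => e; apply: nxy; rewrite e.
  by rewrite /sw eqxx e1 e2.
by apply: gen_conj_swap; apply: gen_sw1' => //; apply/eqP.
Qed.

Lemma gen_mv n (y z : 'I_n.+3) : y != ord0 -> z != y -> gen (mv y z).
Proof.
move=> hy hzy.
have hm : o n n.+2 != ord0 by rewrite neq0 valo.
have hm1 : o n n.+2 != o n 1 by rewrite o_eq.
case: (z =P ord0) => [->|hz].
  have -> : mv y ord0 = mv (sw (o n n.+2) y (o n n.+2)) (sw (o n n.+2) y ord0).
    rewrite /sw eqxx; case: (ord0 =P o n n.+2) => [e|_]; first by rewrite e eqxx in hm.
    by case: (ord0 =P y) => [e|_] //; rewrite e eqxx in hy.
  apply: gen_conj_swap_mv; first exact: gen_swnz.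
  by apply: gen_ext (@letter_d n) (gen_letter n ld).
have o1 : o n 1 != ord0 by rewrite neq0 valo.
have hz' : z != ord0 by apply/eqP.
set s := sw (o n 1) z.
have gs : gen s by apply: gen_swnz.
have sinj : injective s by apply: (can_inj (g := s)) => r; rewrite /s sw_invol.
have s1 : s (o n 1) = z by rewrite /s /sw eqxx.
have s0 : s ord0 = ord0.
  rewrite /s /sw; case: (ord0 =P o n 1) => [e|_]; first by rewrite -e eqxx in o1.
  by case: (ord0 =P z) => [e|_] //; rewrite -e eqxx in hz'.
set p := s (o n n.+2).
have g1 : gen (mv p z).
  rewrite /p -s1; apply: gen_conj_swap_mv => //.
  by apply: gen_ext (@letter_c n) (gen_letter n lc).
have pz : p != z by rewrite /p -s1 (inj_eq sinj).
have p0 : p != ord0 by rewrite /p -s0 (inj_eq sinj).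
have -> : mv y z = mv (sw p y p) (sw p y z).
  rewrite /sw eqxx; case: (z =P p) => [e|_]; first by rewrite e eqxx in pz.
  by case: (z =P y) => [e|_] //; rewrite e eqxx in hzy.
by apply: gen_conj_swap_mv => //; apply: gen_swnz.
Qed.

Lemma gen_perm n m (f : 'I_n.+3 -> 'I_n.+3) :
  injective f -> f ord0 = ord0 -> #|[set q | f q != q]| <= m -> gen f.
Proof.
elim: m f => [|m IH] f finj f0 hm.
  apply: gen_ext (@gen_id n) => q; apply/esym/eqP; apply: contraT => h.
  move: hm; rewrite leqn0 => /eqP /card0_eq /(_ q); by rewrite inE h.
case: (pickP [pred q | f q != q]) => [x /= hx | hnone]; last first.
  apply: gen_ext (@gen_id n) => q; have := hnone q; by move=> /= /negbFE /eqP.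
set y := f x.
have x0 : x != ord0 by apply: contra hx => /eqP ->; rewrite f0.
have y0 : y != ord0 by rewrite /y -f0 (inj_eq finj).
set h := fun q => sw x y (f q).
have hinj : injective h.
  move=> a b; rewrite /h => e; apply: finj.
  by rewrite -(sw_invol x y (f a)) e sw_invol.
have h0 : h ord0 = ord0.
  rewrite /h f0 /sw; case: (ord0 =P x) => [e|_]; first by rewrite e eqxx in x0.
  by case: (ord0 =P y) => [e|_] //; rewrite e eqxx in y0.
have fE : f =1 (fun q => sw x y (h q)) by move=> q; rewrite /h sw_invol.
apply: (gen_ext (f := fun q => sw x y (h q))); first by move=> q; rewrite fE.
apply: gen_comp; last exact: gen_swnz.
apply: IH => //.
rewrite -ltnS; apply: leq_trans hm; apply: proper_card.
apply/properP; split.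
  apply/subsetP => q; rewrite !inE; apply: contra => /eqP fq.
  have qx : q != x by apply: contra hx => /eqP <-; rewrite fq.
  have qy : q != y.
    apply/eqP => e; move: qx; rewrite -(inj_eq finj) fq e eqxx //.
  by rewrite /h fq /sw (negbTE qx) (negbTE qy).
exists x; first by rewrite inE.
have hxx : h x = x by rewrite /h /sw /y (negbTE hx) eqxx.
by rewrite inE hxx eqxx.
Qed.

Lemma noninj_step n (f : 'I_n.+3 -> 'I_n.+3) x1 x2 :
  f ord0 = ord0 -> x1 != x2 -> f x1 = f x2 ->
  exists y z (g : 'I_n.+3 -> 'I_n.+3), [/\ g ord0 = ord0,
    #|[set f q | q in 'I_n.+3]| < #|[set g q | q in 'I_n.+3]|,
    y != ord0, z != y & f =1 (fun q => mv y z (g q))].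
Proof.
move=> f0 h12 e12.
have [a [b [hab eab hb]]] : exists a b, [/\ a != b, f a = f b & b != ord0].
  case: (x2 =P ord0) => [e|ne]; last by exists x1, x2; split => //; apply/eqP.
  exists x2, x1; split => //; first by rewrite eq_sym.
  by rewrite e in h12.
set I := [set f q | q in 'I_n.+3].
have [y hy] : exists y, y \notin I.
  case: (pickP [pred y | y \notin I]) => [y hy|hn]; first by exists y.
  have : #|I| == #|'I_n.+3|.
    suff -> : I = [set: 'I_n.+3] by rewrite cardsT.
    by apply/setP => q; rewrite inE; have := hn q => /= /negbFE.
  move/imset_injP => inj.
  have : a == b by apply/eqP; apply: inj; rewrite ?inE.
  by rewrite (negbTE hab).
set z := f b.
set g := fun q => if q == b then y else f q.
exists y, z, g; split.
- by rewrite /g eq_sym (negbTE hb).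
- apply: proper_card; apply/properP; split.
    apply/subsetP => _ /imsetP [q _ ->].
    case: (q =P b) => [->|nq].
      apply/imsetP; exists a => //; by rewrite /g (negbTE hab).
    by apply/imsetP; exists q => //; rewrite /g; move/eqP/negbTE: nq => ->.
  exists y => //; apply/imsetP; exists b => //; by rewrite /g eqxx.
- by apply: contra hy => /eqP ->; rewrite -f0; apply/imsetP; exists ord0.
- by apply: contra hy => /eqP <-; apply/imsetP; exists b.
- move=> q; rewrite /g /mv; case: (q =P b) => [->|nq]; first by rewrite eqxx.
  case: (f q =P y) => [e|] //.
  by move: hy; rewrite -e; case/negP; apply/imsetP; exists q.
Qed.

Lemma gen_fix0 n m (f : 'I_n.+3 -> 'I_n.+3) :
  f ord0 = ord0 -> n.+3 - #|[set f q | q in 'I_n.+3]| <= m -> gen f.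
Proof.
elim: m f => [|m IH] f f0 hm.
  case: (boolP [exists x1, exists x2, (x1 != x2) && (f x1 == f x2)]).
    case/existsP => x1 /existsP [x2 /andP [h12 /eqP e12]].
    have [y [z [g [g0 lt _ _ _]]]] := noninj_step f0 h12 e12.
    have : #|[set g q | q in 'I_n.+3]| <= n.+3.
      by apply: (leq_trans (leq_imset_card _ _)); rewrite card_ord.
    lia.
  move=> hn; apply: (@gen_perm n n.+3) => //; last first.
    by apply: (leq_trans (max_card _)); rewrite card_ord.
  move=> x1 x2 e; apply/eqP; apply: contraR hn => h.
  by apply/existsP; exists x1; apply/existsP; exists x2; rewrite h e eqxx.
case: (boolP [exists x1, exists x2, (x1 != x2) && (f x1 == f x2)]).
  case/existsP => x1 /existsP [x2 /andP [h12 /eqP e12]].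
  have [y [z [g [g0 lt hy hz fE]]]] := noninj_step f0 h12 e12.
  apply: (gen_ext (f := fun q => mv y z (g q))); first by move=> q; rewrite fE.
  apply: gen_comp; last exact: gen_mv.
  apply: IH => //.
  have : #|[set g q | q in 'I_n.+3]| <= n.+3.
    by apply: (leq_trans (leq_imset_card _ _)); rewrite card_ord.
  lia.
move=> hn; apply: (@gen_perm n n.+3) => //; last first.
  by apply: (leq_trans (max_card _)); rewrite card_ord.
move=> x1 x2 e; apply/eqP; apply: contraR hn => h.
by apply/existsP; exists x1; apply/existsP; exists x2; rewrite h e eqxx.
Qed.

Lemma gen_const n (p : 'I_n.+3) : p != ord0 -> gen (fun _ => p).
Proof.
move=> hp.
have ge : gen (fun _ : 'I_n.+3 => o n 1).
  by apply: gen_ext (@letter_e n) (gen_letter n le).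
case: (p =P o n 1) => [->|np] //.
apply: (gen_ext (f := fun q => mv (o n 1) p ((fun _ => o n 1) q))).
  by move=> q; rewrite /mv eqxx.
apply: gen_comp ge _; apply: gen_mv; first by rewrite neq0 valo.
exact/eqP.
Qed.

Lemma shape (Sigma : finType) m (delta : Sigma -> 'I_m -> 'I_m) F q0 :
  minimal_dfa delta F q0 ->
  (forall w, Klang delta F q0 w <-> exists u v, w = u ++ v /\ Klang delta F q0 v) ->
  (~ exists p q r : 'I_m, prec delta F p q /\ prec delta F q r) ->
  forall w, dstar delta w q0 = q0 \/ forall q, dstar delta w q = dstar delta w q0.
Proof.
move=> [reach dist] HL Hch.
have sub : forall q v, Klang delta F q0 v -> Klang delta F q v.
  move=> q v hv; have [u hu] := reach q.
  rewrite /Klang -hu -dstar_cat; apply/(HL (u ++ v)).2; by exists u, v.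
have mono : forall p q w, (forall v, Klang delta F p v -> Klang delta F q v) ->
    forall v, Klang delta F (dstar delta w p) v -> Klang delta F (dstar delta w q) v.
  by move=> p q w h v; rewrite /Klang -!dstar_cat; apply: h.
have strict : forall p q, p != q -> (forall v, Klang delta F p v -> Klang delta F q v) ->
    prec delta F p q.
  move=> p q npq hs; split => //.
  case: (pselect (exists v, Klang delta F q v /\ ~ Klang delta F p v)) => // hno.
  exfalso; move/eqP: npq; apply; apply: dist => v; split; first exact: hs.
  move=> hq; apply/negPn/negP => hp; apply: hno; exists v; split => //.
  exact/negP.
move=> w; set s := dstar delta w q0.
case: (s =P q0) => [|ns]; [by left | right => q].
apply/eqP; apply: contraT => nq; exfalso; apply: Hch.
exists q0, s, (dstar delta w q); split.
  apply: strict; last exact: sub.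
  by apply/eqP => e; apply: ns; rewrite e.
apply: strict; first by rewrite eq_sym.
by apply: mono => v; apply: sub.
Qed.

Theorem lemma4 (n : nat) (Sigma : finType) (delta : Sigma -> 'I_n -> 'I_n)
  (F : {set 'I_n}) (q0 : 'I_n) :
  3 <= n ->
  nat_of_ord q0 = 0 ->
  minimal_dfa delta F q0 ->
  left_ideal (Klang delta F q0) ->
  (~ exists p q r : 'I_n, prec delta F p q /\ prec delta F q r) ->
  #|trans_sg delta| <= n ^ n.-1 + n - 1 /\
  exists pi : {perm 'I_n},
    forall t, t \in trans_sg delta -> relabel pi t \in S_sg n.
Proof.
move: delta F q0; case: n => [|[|[|n]]] // delta F q0 _ hq0 hmin [_ HL] Hch.
have hq : q0 = ord0 by apply: val_inj.
rewrite hq in hmin HL Hch.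
have sh := shape hmin HL Hch.
split.
  set A := [set t : {ffun 'I_n.+3 -> 'I_n.+3} | t ord0 == ord0].
  set B := [set [ffun _ : 'I_n.+3 => p] | p in [set~ (ord0 : 'I_n.+3)]].
  have sAB : trans_sg delta \subset A :|: B.
    apply/subsetP => t; rewrite inE => /asboolP [w [_ ->]].
    case: (sh w) => [e|e].
      by rewrite inE; apply/orP; left; rewrite inE ffunE e.
    case: (dstar delta w ord0 =P ord0) => [e0|n0].
      by rewrite inE; apply/orP; left; rewrite inE ffunE e0.
    rewrite inE; apply/orP; right; apply/imsetP; exists (dstar delta w ord0).
      by rewrite !inE; apply/eqP.
    by apply/ffunP => q; rewrite !ffunE e.
  apply: leq_trans (subset_leq_card sAB) _.
  rewrite cardsU; apply: leq_trans (leq_subr _ _) _.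
  have cA : #|A| <= n.+3 ^ n.+2.
    have sA : A \subset pffun_on ord0 [set~ (ord0 : 'I_n.+3)] 'I_n.+3.
      apply/subsetP => t; rewrite inE => /eqP t0; apply/pffun_onP; split => //.
      apply/subsetP => x; rewrite !inE; apply: contra => /eqP ->; by rewrite t0.
    apply: leq_trans (subset_leq_card sA) _.
    by rewrite card_pffun_on cardsC1 card_ord.
  have cB : #|B| <= n.+2.
    apply: leq_trans (leq_imset_card _ _) _; by rewrite cardsC1 card_ord.
  by rewrite -addnBA // subn1 /=; apply: leq_add.
exists 1%g => t ht.
have -> : relabel 1 t = t by apply/ffunP => q; rewrite ffunE invg1 !perm1.
move: ht; rewrite !inE => /asboolP [w [_ ->]].
apply/asboolP.
case: (sh w) => [e|e].
  have := @gen_fix0 n n.+3 (fun q => dstar delta w q) e (leq_subr _ _).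
  case=> w' [ne hw']; exists w'; split => //.
  by apply/ffunP => q; rewrite !ffunE hw'.
case: (dstar delta w ord0 =P ord0) => [e0|n0].
  have e' : dstar delta w ord0 = ord0 by [].
  have := @gen_fix0 n n.+3 (fun q => dstar delta w q) e' (leq_subr _ _).
  case=> w' [ne hw']; exists w'; split => //.
  by apply/ffunP => q; rewrite !ffunE hw'.
have : dstar delta w ord0 != ord0 by apply/eqP.
move/gen_const => [w' [ne hw']]; exists w'; split => //.
by apply/ffunP => q; rewrite !ffunE hw' e.
Qed.
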